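(* Let $H$ be a reduced atomic cancellative monoid, and let $\sim_H \subset \mathsf Z(H)\times\mathsf Z(H)$ be its monoid of relations. 1. $\sim_H$ is a saturated submonoid of $\mathsf Z(H)\times \mathsf Z(H)$, and $\sim_H$ is a reduced cancellative BF-monoid. 2. If $\sim_H$ satisfies the ascending chain condition on right ideals, then $\sim_H$ is finitely generated. 3. If $H$ is commutative and finitely generated, then $\sim_H$ satisfies the ascending chain condition on ideals and $\sim_H$ is finitely generated.
   Context: A monoid is an associative semigroup with identity; $H^\times$ is its group of units and $H$ is reduced if $H^\times=\{1\}$. An atom of $H$ is a non-unit $u$ such that $u=ab$ implies $a\in H^\times$ or $b\in H^\times$; $\mathcal A(H)$ is the set of atoms, and $H$ is atomic if every non-unit is a finite product of atoms. For a reduced atomic monoid $H$, the factorization monoid $\mathsf Z(H)$ is the free monoid $\mathcal F^*(\mathcal A(H))$ (words over $\mathcal A(H)$) if $H$ is non-commutative and the free abelian monoid $\mathcal F(\mathcal A(H))$ if $H$ is commutative; $\pi:\mathsf Z(H)\to H$ is the canonical epimorphism, and the length $|z|$ of $z\in\mathsf Z(H)$ is the number of atoms in $z$. The monoid of relations is $\sim_H=\{(x,y)\in\mathsf Z(H)\times\mathsf Z(H)\mid \pi(x)=\pi(y)\}$. A submonoid $S$ of a monoid $D$ is saturated if $a\in D$, $b\in S$ and ($ab\in S$ or $ba\in S$) imply $a\in S$. For an atomic monoid, $\mathsf L(a)$ denotes the set of all $k$ such that $a$ is a product of $k$ atoms (with $\mathsf L(\varepsilon)=\{0\}$ for units); a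 BF-monoid is an atomic monoid in which $\mathsf L(a)$ is finite and nonempty for all $a$. *)

(* Defs.v *)
From Stdlib Require Import List Permutation Arith RelationClasses.
Import ListNotations.
Set Implicit Arguments.
Unset Strict Implicit.

Record monoid := Monoid {
  mcar :> Type;
  mmul : mcar -> mcar -> mcar;
  mone : mcar;
  massoc : forall x y z, mmul x (mmul y z) = mmul (mmul x y) z;
  mmul1l : forall x, mmul mone x = x;
  mmul1r : forall x, mmul x mone = x }.

(** A monoid presented on a setoid (needed for the free abelian monoid
    F(A(H)), represented as lists of atoms modulo permutation). *)
Record smonoid := SMonoid {
  scar :> Type;
  seqv : scar -> scar -> Prop;
  smul : scar -> scar -> scar;
  sone : scar;
  seqv_equiv : Equivalence seqv;
  smul_proper : forall x x' y y', seqv x x' -> seqv y y' ->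
                  seqv (smul x y) (smul x' y');
  sassoc : forall x y z, seqv (smul x (smul y z)) (smul (smul x y) z);
  smul1l : forall x, seqv (smul sone x) x;
  smul1r : forall x, seqv (smul x sone) x }.

Arguments seqv {s} _ _.
Arguments smul {s} _ _.
Arguments sone {s}.

Definition smon_of (H : monoid) : smonoid.
Proof.
  refine (@SMonoid (mcar H) eq (@mmul H) (@mone H) eq_equivalence _
            (@massoc H) (@mmul1l H) (@mmul1r H)).
  intros; subst; reflexivity.
Defined.

Section Notions.
Variable D : smonoid.

Definition sprod (l : list D) : D := fold_right smul sone l.

Definition is_unit (u : D) : Prop :=
  exists v : D, seqv (smul u v) sone /\ seqv (smul v u) sone.

Definition reduced : Prop := forall u : D, is_unit u -> seqv u sone.

Definition is_atom (a : D) : Prop :=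
  ~ is_unit a /\ forall b c : D, seqv a (smul b c) -> is_unit b \/ is_unit c.

Definition atomic : Prop :=
  forall a : D, ~ is_unit a ->
    exists l : list D, Forall is_atom l /\ seqv a (sprod l).

Definition cancellative : Prop :=
  (forall a b c : D, seqv (smul a b) (smul a c) -> seqv b c) /\
  (forall a b c : D, seqv (smul b a) (smul c a) -> seqv b c).

Definition commutative : Prop := forall a b : D, seqv (smul a b) (smul b a).

Definition lengths (a : D) (k : nat) : Prop :=
  (is_unit a /\ k = 0) \/
  (~ is_unit a /\ exists l : list D,
       Forall is_atom l /\ length l = k /\ seqv a (sprod l)).

Definition BF : Prop :=
  atomic /\ forall a : D, (exists k, lengths a k) /\
                          (exists N, forall k, lengths a k -> k <= N).

Definition fin_gen : Prop :=
  exists g : list D, forall a : D,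
    exists l : list D, Forall (fun x => In x g) l /\ seqv a (sprod l).

Definition right_ideal (I : D -> Prop) : Prop :=
  (forall x y : D, seqv x y -> I x -> I y) /\
  (forall x h : D, I x -> I (smul x h)).

Definition ideal (I : D -> Prop) : Prop :=
  right_ideal I /\ (forall x h : D, I x -> I (smul h x)).

Definition ACC (P : (D -> Prop) -> Prop) : Prop :=
  forall I : nat -> D -> Prop,
    (forall n, P (I n)) ->
    (forall n x, I n x -> I (S n) x) ->
    exists N, forall n x, N <= n -> I n x -> I N x.

Definition submonoid (P : D -> Prop) : Prop :=
  (forall x y : D, seqv x y -> P x -> P y) /\ P sone /\
  (forall x y : D, P x -> P y -> P (smul x y)).

Definition saturated (P : D -> Prop) : Prop :=
  forall a b : D, P b -> (P (smul a b) \/ P (smul b a)) -> P a.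

End Notions.

Definition prod_smon (D1 D2 : smonoid) : smonoid.
Proof.
  refine (@SMonoid (D1 * D2)%type
     (fun p q => seqv (fst p) (fst q) /\ seqv (snd p) (snd q))
     (fun p q => (smul (fst p) (fst q), smul (snd p) (snd q)))
     (sone, sone) _ _ _ _ _).
  - pose proof (seqv_equiv D1) as E1; pose proof (seqv_equiv D2) as E2.
    split.
    + intros [a b]; split; reflexivity.
    + intros [a b] [c d] [h1 h2]; split; symmetry; assumption.
    + intros [a b] [c d] [e f] [h1 h2] [h3 h4]; split; etransitivity; eauto.
  - intros [a b] [c d] [e f] [g h] [h1 h2] [h3 h4]; split; simpl in *;
      apply smul_proper; assumption.
  - intros; split; apply sassoc.
  - intros; split; apply smul1l.
  - intros; split; apply smul1r.
Defined.

Definition sub_smon (D : smonoid) (P : D -> Prop) (P1 : P sone)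
  (Pm : forall x y, P x -> P y -> P (smul x y)) : smonoid.
Proof.
  refine (@SMonoid {x : D | P x}
     (fun x y => seqv (proj1_sig x) (proj1_sig y))
     (fun x y => exist _ (smul (proj1_sig x) (proj1_sig y))
                         (Pm _ _ (proj2_sig x) (proj2_sig y)))
     (exist _ sone P1) _ _ _ _ _).
  - pose proof (seqv_equiv D) as E.
    split.
    + intros x; reflexivity.
    + intros x y h; symmetry; exact h.
    + intros x y z h1 h2; etransitivity; eauto.
  - intros; simpl; apply smul_proper; assumption.
  - intros; apply sassoc.
  - intros; apply smul1l.
  - intros; apply smul1r.
Defined.

Definition atomT (H : monoid) := {a : H | @is_atom (smon_of H) a}.

(** Z(H) = F*(A(H)) (words) if H is non-commutative, and F(A(H))
    (words modulo permutation) if H is commutative. *)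
Definition Zeqv (H : monoid) (z1 z2 : list (atomT H)) : Prop :=
  z1 = z2 \/ (commutative (smon_of H) /\ Permutation z1 z2).

Definition Zmon (H : monoid) : smonoid.
Proof.
  refine (@SMonoid (list (atomT H)) (@Zeqv H) (@app _) nil _ _ _ _ _).
  - split.
    + intros x; left; reflexivity.
    + intros x y [h|[c h]]; [left; symmetry; exact h|right; split;
        [exact c| apply Permutation_sym; exact h]].
    + intros x y z [h1|[c1 h1]] [h2|[c2 h2]].
      * left; congruence.
      * subst; right; auto.
      * subst; right; auto.
      * right; split; [exact c1|]; eapply perm_trans; eauto.
  - intros x x' y y' [h1|[c1 h1]] [h2|[c2 h2]].
    + left; congruence.
    + subst; right; split; [exact c2|]; apply Permutation_app_head; exact h2.
    + subst; right; split; [exact c1|]; apply Permutation_app_tail; exact h1.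
    + right; split; [exact c1|]; apply Permutation_app; assumption.
  - intros; left; apply app_assoc.
  - intros; left; reflexivity.
  - intros; left; apply app_nil_r.
Defined.

Definition pi (H : monoid) (z : list (atomT H)) : H :=
  fold_right (fun a x => @mmul H (proj1_sig a) x) (@mone H) z.

Lemma pi_app (H : monoid) (z1 z2 : list (atomT H)) :
  pi (z1 ++ z2) = @mmul H (pi z1) (pi z2).
Proof.
  induction z1 as [|a z1 IH]; simpl.
  - symmetry; apply mmul1l.
  - rewrite IH; apply massoc.
Qed.

Definition ZZ (H : monoid) : smonoid := prod_smon (Zmon H) (Zmon H).

Definition relP (H : monoid) (p : ZZ H) : Prop := pi (fst p) = pi (snd p).

Lemma relP_one (H : monoid) : relP (H := H) sone.
Proof. reflexivity. Qed.

Lemma relP_mul (H : monoid) (p q : ZZ H) :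
  relP p -> relP q -> relP (smul p q).
Proof.
  unfold relP; destruct p as [a b], q as [c d]; simpl; intros h1 h2.
  rewrite !pi_app, h1, h2; reflexivity.
Qed.

Definition RelMon (H : monoid) : smonoid :=
  @sub_smon (ZZ H) (@relP H) (relP_one H) (@relP_mul H).

(* Main.v *)
Require Import Defs.
From Stdlib Require Import List Permutation Arith Lia Setoid Morphisms RelationClasses.
From Stdlib Require Import Classical ClassicalEpsilon ProofIrrelevance.
Import ListNotations.

#[global] Instance seqv_Equiv (D : smonoid) : Equivalence (@seqv D) := seqv_equiv D.
#[global] Instance smul_Proper (D : smonoid) : Proper (seqv ==> seqv ==> seqv) (@smul D).
Proof. intros x x' e y y' f; apply smul_proper; auto. Qed.

Section Gen.
Variable D : smonoid.

Lemma sprod_app (l1 l2 : list D) :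
  seqv (sprod (l1 ++ l2)) (smul (sprod l1) (sprod l2)).
Proof.
  induction l1 as [|a l1 IH]; simpl.
  - symmetry; apply smul1l.
  - rewrite IH; apply sassoc.
Qed.

Variable sz : D -> nat.
Hypothesis Hs1 : forall x y : D, seqv x y -> sz x = sz y.
Hypothesis Hs2 : forall x y : D, sz (smul x y) = sz x + sz y.
Hypothesis Hs3 : forall x : D, sz x = 0 -> is_unit x.

Lemma sz_pos x : ~ is_unit x -> 1 <= sz x.
Proof. intro h; destruct (sz x) eqn:E; [exfalso; apply h, Hs3; auto|lia]. Qed.

Lemma atomic_sz_aux : forall n (a : D), sz a = n -> ~ is_unit a ->
  exists l, Forall (@is_atom D) l /\ seqv a (sprod l).
Proof.
  intro n; induction n as [n IH] using (well_founded_induction lt_wf).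
  intros a Ha Hu.
  destruct (classic (is_atom a)) as [Hat|Hna].
  - exists [a]; split; [constructor; auto|]. simpl. symmetry; apply smul1r.
  - assert (exists b c, seqv a (smul b c) /\ ~is_unit b /\ ~is_unit c) as (b&c&E&Hb&Hc).
    { apply NNPP; intro Hn; apply Hna; split; auto. intros b c E.
      apply NNPP; intro Hbc; apply Hn; exists b, c; split; auto.
      }
    pose proof (Hs1 _ _ E) as E1. rewrite Hs2 in E1.
    pose proof (sz_pos _ Hb). pose proof (sz_pos _ Hc).
    destruct (IH (sz b) ltac:(lia) b eq_refl Hb) as (lb&Hlb&Eb).
    destruct (IH (sz c) ltac:(lia) c eq_refl Hc) as (lc&Hlc&Ec).
    exists (lb ++ lc); split; [apply Forall_app; auto|].
    rewrite sprod_app, E, Eb, Ec. reflexivity.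
Qed.

Lemma atomic_sz : atomic D.
Proof. intros a Hu; eapply atomic_sz_aux; eauto. Qed.

Lemma sz_one : sz sone = 0.
Proof. pose proof (Hs1 _ _ (smul1l (sone (s:=D)))) as e. rewrite Hs2 in e. lia. Qed.

Lemma len_le (l : list D) : Forall (@is_atom D) l -> length l <= sz (sprod l).
Proof.
  induction 1 as [|a l Ha Hl IH]; simpl; [lia|].
  rewrite Hs2. pose proof (sz_pos _ (proj1 Ha)). lia.
Qed.

Lemma BF_sz : BF D.
Proof.
  split; [apply atomic_sz|]. intro a; split.
  - destruct (classic (is_unit a)) as [Hu|Hu].
    + exists 0; left; auto.
    + destruct (atomic_sz _ Hu) as (l&Hl&E). exists (length l); right; eauto.
  - exists (sz a). intros k [[Hu ->]|[Hu (l&Hl&Hk&E)]]; [lia|]. subst k.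
    rewrite (Hs1 _ _ E). apply len_le; auto.
Qed.

End Gen.

Fixpoint seqL {D : Type} (F : list D -> D) (n : nat) : list D :=
  match n with 0 => nil | S n => F (seqL F n) :: seqL F n end.

Lemma seqL_in {D : Type} (F : list D -> D) i n : i < n -> In (F (seqL F i)) (seqL F n).
Proof.
  induction n; intro h; [lia|]. simpl.
  destruct (Nat.eq_dec i n); [subst; left; auto|right; apply IHn; lia].
Qed.

Lemma acc_fg (D : smonoid) : reduced D -> atomic D -> ACC (@right_ideal D) -> fin_gen D.
Proof.
  intros Hred Hat Hacc. apply NNPP; intro Hn.
  assert (Hnew : forall g : list D, exists a, is_atom a /\ forall x, In x g -> ~ seqv a x).
  { intro g. apply NNPP; intro H1. apply Hn. exists g.
    assert (Hc : forall a, is_atom a -> exists x, In x g /\ seqv a x).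
    { intros a Ha. apply NNPP; intro H2; apply H1; exists a; split; auto.
      intros x Hx E; apply H2; eauto. }
    assert (Hm : forall l, Forall (@is_atom D) l -> exists l',
              Forall (fun x => In x g) l' /\ seqv (sprod l) (sprod l')).
    { induction 1 as [|a l Ha Hl IH].
      - exists nil; split; [constructor|reflexivity].
      - destruct IH as (l'&H1'&E'). destruct (Hc a Ha) as (x&Hx&Ex).
        exists (x :: l'); split; [constructor; auto|]. simpl. rewrite E', Ex; reflexivity. }
    intro a. destruct (classic (is_unit a)) as [Hu|Hu].
    - exists nil; split; [constructor|]. simpl. apply Hred; auto.
    - destruct (Hat a Hu) as (l&Hl&E). destruct (Hm l Hl) as (l'&Hl'&E').
      exists l'; split; auto. rewrite E; auto. }
  pose (F := fun g => proj1_sig (constructive_indefinite_description _ (Hnew g))).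
  assert (HF : forall g, is_atom (F g) /\ forall x, In x g -> ~ seqv (F g) x).
  { intro g; unfold F; destruct (constructive_indefinite_description _ (Hnew g)); auto. }
  pose (u := fun n => F (seqL F n)).
  pose (I := fun n (x : D) => exists i, i <= n /\ exists h, seqv x (smul (u i) h)).
  destruct (Hacc I) as [N HN].
  - intro n; split.
    + intros x y E (i&Hi&h&Eh). exists i; split; auto; exists h. rewrite <- E; auto.
    + intros x h' (i&Hi&h&Eh). exists i; split; auto; exists (smul h h').
      rewrite Eh. symmetry; apply sassoc.
  - intros n x (i&Hi&h&Eh). exists i; split; [lia|]; eauto.
  - assert (HI : I (S N) (u (S N))).
    { exists (S N); split; auto. exists sone. symmetry; apply smul1r. }
    destruct (HN (S N) _ ltac:(lia) HI) as (i&Hi&h&Eh).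
    destruct (HF (seqL F (S N))) as [[Hua Hatom] Hnot].
    destruct (Hatom _ _ Eh) as [Hu|Hu].
    + destruct (HF (seqL F i)) as [[Hui _] _]. apply Hui; exact Hu.
    + apply (Hnot (u i)). apply seqL_in; lia.
      change (seqv (u (S N)) (u i)). rewrite Eh, (Hred _ Hu). apply smul1r.
Qed.
Set Implicit Arguments.
Unset Strict Implicit.

Section H.
Variable H : monoid.

Lemma pi_perm (Hc : commutative (smon_of H)) (x y : list (atomT H)) :
  Permutation x y -> pi x = pi y.
Proof.
  induction 1; simpl; auto; try congruence.
  rewrite !massoc. f_equal. exact (Hc _ _).
Qed.

Lemma pi_Zeqv (x y : list (atomT H)) : Zeqv x y -> pi x = pi y.
Proof. intros [->|[c p]]; auto. apply pi_perm; auto. Qed.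

Lemma Zeqv_len (x y : list (atomT H)) : Zeqv x y -> length x = length y.
Proof. intros [->|[c p]]; auto. apply Permutation_length; auto. Qed.

Definition szR (u : RelMon H) : nat :=
  length (fst (proj1_sig u)) + length (snd (proj1_sig u)).

Lemma szR1 : forall x y : RelMon H, seqv x y -> szR x = szR y.
Proof.
  intros [[x1 x2] p] [[y1 y2] q] [e1 e2]; unfold szR; simpl in *.
  rewrite (Zeqv_len e1), (Zeqv_len e2); auto.
Qed.

Lemma szR2 : forall x y : RelMon H, szR (smul x y) = szR x + szR y.
Proof.
  intros [[x1 x2] p] [[y1 y2] q]; unfold szR; simpl. rewrite !length_app; lia.
Qed.

Lemma szR0 (x : RelMon H) : szR x = 0 -> seqv x sone.
Proof.
  destruct x as [[[|] [|]] p]; unfold szR; simpl; intro h; try lia.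
  split; left; reflexivity.
Qed.

Lemma szR3 : forall x : RelMon H, szR x = 0 -> is_unit x.
Proof.
  intros x h. exists x. rewrite (szR0 h). split; apply smul1l.
Qed.

Lemma part1 (Hred : reduced (smon_of H)) (Hcanc : cancellative (smon_of H)) :
  submonoid (@relP H) /\ saturated (@relP H) /\
   reduced (RelMon H) /\ cancellative (RelMon H) /\ BF (RelMon H).
Proof.
  split; [|split; [|split; [|split]]].
  - split; [|split; [apply relP_one|apply relP_mul]].
    intros [x1 x2] [y1 y2] [e1 e2]; unfold relP; simpl in *.
    rewrite (pi_Zeqv e1), (pi_Zeqv e2); auto.
  - intros [a1 a2] [b1 b2]; unfold relP; simpl; rewrite !pi_app.
    intros hb [h|h]; rewrite hb in h.
    + exact (proj2 Hcanc _ _ _ h).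
    + exact (proj1 Hcanc _ _ _ h).
  - intros u [v [e _]]. apply szR0. pose proof (szR1 e) as h.
    rewrite szR2 in h. change (szR u + szR v = 0) in h. lia.
  - split.
    + intros [[a1 a2] pa] [[b1 b2] pb] [[c1 c2] pc] [e1 e2]; simpl in *.
      split; [destruct e1 as [e|[c e]]|destruct e2 as [e|[c e]]].
      * left; eapply app_inv_head; eauto.
      * right; split; auto; eapply Permutation_app_inv_l; eauto.
      * left; eapply app_inv_head; eauto.
      * right; split; auto; eapply Permutation_app_inv_l; eauto.
    + intros [[a1 a2] pa] [[b1 b2] pb] [[c1 c2] pc] [e1 e2]; simpl in *.
      split; [destruct e1 as [e|[c e]]|destruct e2 as [e|[c e]]].
      * left; eapply app_inv_tail; eauto.
      * right; split; auto; eapply Permutation_app_inv_r; eauto.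
      * left; eapply app_inv_tail; eauto.
      * right; split; auto; eapply Permutation_app_inv_r; eauto.
  - apply (@BF_sz (RelMon H) szR); [exact szR1|exact szR2|exact szR3].
Qed.

End H.
Set Implicit Arguments.
Unset Strict Implicit.

Lemma min_exists (f : nat -> nat) p : exists m, p < m /\ forall m', p < m' -> f m <= f m'.
Proof.
  assert (forall v m, p < m -> f m <= v -> exists m0, p < m0 /\ forall m', p < m' -> f m0 <= f m').
  { induction v; intros m Hm Hv.
    - exists m; split; auto; intros; lia.
    - destruct (classic (exists m', p < m' /\ f m' < f m)) as [(m'&H1&H2)|Hn].
      + apply (IHv m'); auto; lia.
      + exists m; split; auto. intros m' Hm'. apply NNPP; intro; apply Hn; exists m'; split; auto; lia. }
  apply (H (f (S p)) (S p)); auto.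
Qed.

Fixpoint iterf (g : nat -> nat) (n : nat) : nat :=
  match n with 0 => 0 | S n => g (iterf g n) end.

Lemma dickson1 (f : nat -> nat) : exists phi : nat -> nat,
  (forall n, phi n < phi (S n)) /\ (forall n, f (phi n) <= f (phi (S n))).
Proof.
  pose (nxt := fun p => proj1_sig (constructive_indefinite_description _ (min_exists f p))).
  assert (Hn : forall p, p < nxt p /\ forall m', p < m' -> f (nxt p) <= f m').
  { intro p; unfold nxt; destruct constructive_indefinite_description; auto. }
  exists (fun n => nxt (iterf nxt n)). split; intro n; simpl.
  - apply (proj1 (Hn _)).
  - apply (proj2 (Hn _)). pose proof (proj1 (Hn (iterf nxt n))). pose proof (proj1 (Hn (nxt (iterf nxt n)))). lia.
Qed.

Lemma incr_mono (phi : nat -> nat) : (forall n, phi n < phi (S n)) ->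
  forall i j, i < j -> phi i < phi j.
Proof.
  intros h i j; induction j; intro hij; [lia|].
  destruct (Nat.eq_dec i j); [subst; auto|]. specialize (h j); specialize (IHj ltac:(lia)); lia.
Qed.

Lemma chain_mono (F : nat -> nat) : (forall n, F n <= F (S n)) ->
  forall i j, i <= j -> F i <= F j.
Proof.
  intros h i j; induction j; intro hij; [assert (i = 0) by lia; subst; auto|].
  destruct (Nat.eq_dec i (S j)); [subst; auto|]. specialize (h j); specialize (IHj ltac:(lia)); lia.
Qed.

Lemma dickson (A : Type) (g : list A) (f : nat -> A -> nat) : exists phi : nat -> nat,
  (forall n, phi n < phi (S n)) /\ (forall n a, In a g -> f (phi n) a <= f (phi (S n)) a).
Proof.
  induction g as [|a g IH].
  - exists (fun n => n); split; [intros; lia|intros n a []].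
  - destruct IH as (phi&H1&H2).
    destruct (dickson1 (fun n => f (phi n) a)) as (psi&K1&K2).
    exists (fun n => phi (psi n)); split.
    + intro n; apply incr_mono; auto.
    + intros n b [<-|Hb]; auto.
      apply (chain_mono (F := fun k => f (phi k) b)); [intro k; apply H2; auto|].
      specialize (K1 n); lia.
Qed.

Lemma dickson2 (A : Type) (g : list A) (f : nat -> A -> nat) : exists i j,
  i < j /\ forall a, In a g -> f i a <= f j a.
Proof.
  destruct (dickson g f) as (phi&H1&H2). exists (phi 0), (phi 1); split; auto.
Qed.

Section H3.
Variable H : monoid.

Fixpoint cnt (h : H) (x : list (atomT H)) : nat :=
  match x with
  | nil => 0
  | a :: x => (if excluded_middle_informative (proj1_sig a = h) then 1 else 0) + cnt h x
  end.

Lemma cnt_app h x y : cnt h (x ++ y) = cnt h x + cnt h y.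
Proof. induction x; simpl; auto; rewrite IHx; lia. Qed.

Lemma atomT_eq (a b : atomT H) : proj1_sig a = proj1_sig b -> a = b.
Proof. destruct a, b; simpl; intro; subst; f_equal; apply proof_irrelevance. Qed.

Lemma cnt_in h x : 1 <= cnt h x -> exists a, In a x /\ proj1_sig a = h.
Proof.
  induction x as [|a x IH]; simpl; [lia|].
  destruct excluded_middle_informative; intro.
  - exists a; auto.
  - destruct IH as (b&?&?); [lia|]. exists b; auto.
Qed.

Lemma dominate : forall (x x' : list (atomT H)), (forall h, cnt h x <= cnt h x') ->
  exists d, Permutation x' (x ++ d).
Proof.
  induction x as [|a x IH]; intros x' Hd.
  - exists x'; auto.
  - destruct (@cnt_in (proj1_sig a) x') as (b&Hb&Eb).
    { specialize (Hd (proj1_sig a)); simpl in Hd.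
      destruct excluded_middle_informative; [lia|congruence]. }
    apply atomT_eq in Eb; subst b.
    destruct (in_split _ _ Hb) as (l1&l2&->).
    destruct (IH (l1 ++ l2)) as (d&Pd).
    { intro h; specialize (Hd h); simpl in Hd; rewrite !cnt_app in *; simpl in Hd. lia. }
    exists d. simpl. eapply perm_trans; [apply Permutation_sym, Permutation_middle|].
    constructor; auto.
Qed.

Lemma cnt_out (g : list H) (Hg : forall a : atomT H, In (proj1_sig a) g) h x :
  ~ In h g -> cnt h x = 0.
Proof.
  intro hn; induction x as [|a x IH]; simpl; auto.
  destruct excluded_middle_informative as [e|]; auto. subst; exfalso; apply hn; apply Hg.
Qed.

Lemma atoms_in (Hred : reduced (smon_of H)) (g : list H) :
  forall l : list H, Forall (fun x => In x g) l -> @is_atom (smon_of H) (sprod (D:=smon_of H) l) ->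
  In (sprod (D:=smon_of H) l) g.
Proof.
  induction 1 as [|x l Hx Hl IH]; simpl; intros [Hu Ha].
  - exfalso; apply Hu. exists (@mone H); split; apply mmul1l.
  - destruct (Ha x (sprod (D:=smon_of H) l) eq_refl) as [Hxu|Hlu].
    + apply Hred in Hxu.
      assert (e : @mmul H x (sprod (D:=smon_of H) l) = sprod (D:=smon_of H) l)
        by (rewrite Hxu; apply mmul1l).
      rewrite e in *. apply IH; split; auto.
    + apply Hred in Hlu.
      assert (e : @mmul H x (sprod (D:=smon_of H) l) = x)
        by (rewrite Hlu; apply mmul1r).
      rewrite e; auto.
Qed.

Lemma acc3 (Hred : reduced (smon_of H)) (Hcanc : cancellative (smon_of H))
  (Hc : commutative (smon_of H)) (Hfg : fin_gen (smon_of H)) :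
  ACC (@right_ideal (RelMon H)).
Proof.
  destruct Hfg as [g Hg].
  assert (Hag : forall a : atomT H, In (proj1_sig a) g).
  { intros [a Ha]; simpl. destruct (Hg a) as (l&Hl&E). simpl in E; subst a.
    apply atoms_in; auto. }
  intros I HI Hasc. apply NNPP; intro Hn.
  assert (Hx : forall N, exists p : nat * RelMon H, N <= fst p /\ I (fst p) (snd p) /\ ~ I N (snd p)).
  { intro N. apply NNPP; intro H1; apply Hn; exists N. intros n x Hle HIn.
    apply NNPP; intro H2; apply H1; exists (n, x); simpl; auto. }
  pose (nx := fun N => proj1_sig (constructive_indefinite_description _ (Hx N))).
  assert (Hnx : forall N, N <= fst (nx N) /\ I (fst (nx N)) (snd (nx N)) /\ ~ I N (snd (nx N))).
  { intro N; unfold nx; destruct constructive_indefinite_description; auto. }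
  pose (Ns := iterf (fun N => fst (nx N))).
  pose (xs := fun k => snd (nx (Ns k))).
  assert (Hmono : forall a b x, a <= b -> I a x -> I b x).
  { intros a b x hab; induction hab; auto. }
  assert (HNs : forall i j, i <= j -> Ns i <= Ns j).
  { apply chain_mono. intro n. simpl. apply Hnx. }
  pose (f := fun k (bh : bool * H) =>
    cnt (snd bh) ((if fst bh then fst else snd) (proj1_sig (xs k)))).
  destruct (dickson2 (map (pair true) g ++ map (pair false) g) f) as (i&j&Hij&Hd).
  destruct (xs i) as [[a1 a2] pa] eqn:Ei.
  destruct (xs j) as [[b1 b2] pb] eqn:Ej.
  assert (D1 : forall h, cnt h a1 <= cnt h b1).
  { intro h. destruct (classic (In h g)) as [hg|hg].
    - specialize (Hd (true, h) ltac:(apply in_or_app; left; apply in_map; auto)).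
      unfold f in Hd; simpl in Hd; rewrite Ei, Ej in Hd; exact Hd.
    - rewrite (cnt_out Hag a1 hg); lia. }
  assert (D2 : forall h, cnt h a2 <= cnt h b2).
  { intro h. destruct (classic (In h g)) as [hg|hg].
    - specialize (Hd (false, h) ltac:(apply in_or_app; right; apply in_map; auto)).
      unfold f in Hd; simpl in Hd; rewrite Ei, Ej in Hd; exact Hd.
    - rewrite (cnt_out Hag a2 hg); lia. }
  destruct (dominate D1) as (d1&P1). destruct (dominate D2) as (d2&P2).
  assert (pd : relP (H:=H) (d1, d2)).
  { pose proof pb as pb'. pose proof pa as pa'. unfold relP in pb', pa' |- *; simpl in *.
    rewrite (pi_perm Hc P1), (pi_perm Hc P2), !pi_app, pa' in pb'.
    exact (proj1 Hcanc _ _ _ pb'). }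
  pose (dR := exist (@relP H) (d1, d2) pd : RelMon H).
  assert (E : seqv (smul (xs i) dR) (xs j)).
  { rewrite Ei, Ej. simpl. split; right; split; auto; apply Permutation_sym; auto. }
  assert (I1 : I (Ns (S i)) (xs i)) by apply Hnx.
  assert (I2 : I (Ns (S i)) (xs j)).
  { destruct (HI (Ns (S i))) as [Hs Hr]. apply (Hs _ _ E). apply Hr; auto. }
  apply (proj2 (proj2 (Hnx (Ns j)))). apply (Hmono (Ns (S i))); auto.
Qed.

End H3.
Unset Implicit Arguments.
Set Strict Implicit.

Theorem lemma3p3 (H : monoid)
  (Hred : reduced (smon_of H)) (Hat : atomic (smon_of H))
  (Hcanc : cancellative (smon_of H)) :
  (submonoid (@relP H) /\ saturated (@relP H) /\
   reduced (RelMon H) /\ cancellative (RelMon H) /\ BF (RelMon H))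
  /\ (ACC (@right_ideal (RelMon H)) -> fin_gen (RelMon H))
  /\ (commutative (smon_of H) -> fin_gen (smon_of H) ->
        ACC (@ideal (RelMon H)) /\ fin_gen (RelMon H)).
Proof.
  pose proof (part1 Hred Hcanc) as (P1&P2&P3&P4&P5).
  split; [split; auto|split].
  - intro Hacc. apply acc_fg; auto. apply (proj1 P5).
  - intros Hc Hfg. pose proof (acc3 Hred Hcanc Hc Hfg) as Hr. split.
    + intros I HI Hasc. apply Hr; auto. intro n; apply (proj1 (HI n)).
    + apply acc_fg; auto. apply (proj1 P5).
Qed.
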